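(* In the setting of the context, assume that $\widetilde F,\widetilde G\in\mathbb C(s)$, and define $\widetilde f=\tfrac12(\widetilde F+\widetilde F^{\iota_1})$, $\widetilde g=\tfrac12(\widetilde G+\widetilde G^{\iota_2})$, $\widetilde f_h=\tfrac12(\widetilde F-\widetilde F^{\iota_1})$, $\widetilde g_h=\tfrac12(\widetilde G-\widetilde G^{\iota_2})$. Then: (1) the pair $(h_1,h_2)=(\widetilde f,\widetilde g)$ satisfies $\widetilde\gamma_1h_1+\widetilde\gamma_2h_2+\omega=0$ with $h_1^{\iota_1}=h_1$ and $h_2^{\iota_2}=h_2$; (2) the pair $(h_1,h_2)=(\widetilde f_h,\widetilde g_h)$ satisfies $\widetilde\gamma_1h_1+\widetilde\gamma_2h_2=0$ with $h_1^{\iota_1}=-h_1$ and $h_2^{\iota_2}=-h_2$.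
   Context: Let $\mathcal S$ be one of $\mathcal S_1=\{(1,-1),(-1,1),(0,1)\}$, $\mathcal S_2=\{(1,-1),(-1,1),(1,0),(0,1)\}$, $\mathcal S_3=\{(1,-1),(-1,1),(1,1)\}$, $\mathcal S_4=\{(1,-1),(-1,1),(0,1),(1,1)\}$, $\mathcal S_5=\{(1,-1),(-1,1),(1,0),(0,1),(1,1)\}$ with weights $d_{i,j}>0$ on $\mathcal S$ and Boltzmann weights $a,b>0$; $\mathbb F=\mathbb Q((d_{i,j}),a,b)$, $A=1-1/a$, $B=1-1/b$, $\omega=1-A-B$. $Q(x,y)$ is the generating function of weighted quadrant walks with interacting boundaries on $\mathcal S$ (weight $\prod_vd_v^{n_v}a^{n_x}b^{n_y}$, $n_x,n_y$ the numbers of visits after time $0$ to the $x$- and $y$-axis, monomial $x^iy^jt^n$ for endpoint $(i,j)$ and length $n$). Fix a real $t>0$ transcendental over $\mathbb F$, small enough that $Q$ converges for $|x|,|y|<1$. Let $\phi:s\mapsto(x(s),y(s))$ be a fixed rational parametrization by $\mathbb P^1$ of the closure in $\mathbb P^1\times\mathbb P^1$ of $\{xy(1-t\sum_{(i,j)\in\mathcal S}d_{i,j}x^iy^j)=0\}$, with $x(0)=y(0)=x(\infty)=y(\infty)=0$, $x(1/s)=x(s)$, $y(q/s)=y(s)$ for a fixed real $q$ not a root of unity. Let $\iota_1(s)=1/s$, $\iota_2(s)=q/s$ and $h^\tau=h\circ\tau$. Let $\widetilde\gamma_1=A/x(s)-td_{1,-1}/y(s)$, $\widetilde\gamma_2=B/y(s)-td_{-1,1}/x(s)$,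 $\widetilde\gamma=\widetilde\gamma_1/\widetilde\gamma_2$. $\widetilde F$, $\widetilde G$ are the meromorphic continuations to $\mathbb C$ of $x(s)Q(x(s),0)$ and $y(s)Q(0,y(s))$; they satisfy $\widetilde\gamma_1\widetilde F+\widetilde\gamma_2\widetilde G+\omega=0$ and $\widetilde F(s/q)=\frac{\widetilde\gamma}{\widetilde\gamma^{\iota_2}}(s)\widetilde F(s)+\big(\frac{\omega}{\widetilde\gamma_2(s)}-\frac{\omega}{\widetilde\gamma_2^{\iota_2}(s)}\big)\frac{1}{\widetilde\gamma^{\iota_2}(s)}$. *)

(* Defs.v *)
From mathcomp Require Import all_boot all_order all_algebra.
From mathcomp Require Import reals.
From mathcomp.real_closed Require Import complex.
Set Implicit Arguments. Unset Strict Implicit. Unset Printing Implicit Defensive.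
Import Order.TTheory GRing.Theory Num.Theory.
Local Open Scope ring_scope.

Definition S1 : seq (int * int) := [:: (1, -1); (-1, 1); (0, 1)].
Definition S2 : seq (int * int) := [:: (1, -1); (-1, 1); (1, 0); (0, 1)].
Definition S3 : seq (int * int) := [:: (1, -1); (-1, 1); (1, 1)].
Definition S4 : seq (int * int) := [:: (1, -1); (-1, 1); (0, 1); (1, 1)].
Definition S5 : seq (int * int) := [:: (1, -1); (-1, 1); (1, 0); (0, 1); (1, 1)].

Section Defs.
Variable R : realType.
Local Notation C := (R[i]).

Definition toC (r : R) : C := Complex r 0.

(* The kernel polynomial x y (1 - t sum_{(i,j) in S} d_{i,j} x^i y^j),
   written with nonnegative exponents i+1, j+1 (all in {0,1,2}). *)
Definition kernel (S : seq (int * int)) (d : int * int -> R) (t : R) (X Y : C) : C :=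
  X * Y - toC t * \sum_(st <- S) toC (d st) * X ^ (st.1 + 1) * Y ^ (st.2 + 1).

(* equality of (rational) functions of s: equality outside a finite set *)
Definition eq_cofin (f g : C -> C) : Prop :=
  exists Z : seq C, forall s, s \notin Z -> f s = g s.

Definition is_ratfun (f : C -> C) : Prop :=
  exists p r : {poly C}, r != 0 /\ forall s, r.[s] != 0 -> f s = p.[s] / r.[s].

Definition nonconst (f : C -> C) : Prop := ~ exists c : C, eq_cofin f (fun _ => c).

(* the rational function f satisfies f(0) = 0 and f(infinity) = 0 *)
Definition zero_at_0_and_inf (f : C -> C) : Prop :=
  exists p r : {poly C}, [/\ r != 0, forall s, r.[s] != 0 -> f s = p.[s] / r.[s],
    r.[0] != 0, p.[0] = 0 & (size p < size r)%N].

Definition gen_injective (x y : C -> C) : Prop :=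
  exists Z : seq C, forall s s', s \notin Z -> s' \notin Z ->
    x s = x s' -> y s = y s' -> s = s'.

Definition iota1 (s : C) : C := s^-1.
Definition iota2 (q : R) (s : C) : C := toC q / s.

Definition Acoef (a : R) : R := 1 - a^-1.   (* A = 1 - 1/a ; B = Acoef b *)
Definition omega (a b : R) : R := 1 - Acoef a - Acoef b.

Definition gam1 (d : int * int -> R) (a t : R) (x y : C -> C) (s : C) : C :=
  toC (Acoef a) / x s - toC (t * d (1, -1)) / y s.
Definition gam2 (d : int * int -> R) (b t : R) (x y : C -> C) (s : C) : C :=
  toC (Acoef b) / y s - toC (t * d (-1, 1)) / x s.
Definition gam (d : int * int -> R) (a b t : R) (x y : C -> C) (s : C) : C :=
  gam1 d a t x y s / gam2 d b t x y s.

End Defs.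

(* Main.v *)
Require Import Defs.
From mathcomp Require Import all_boot all_order all_algebra.
From mathcomp Require Import reals.
From mathcomp.real_closed Require Import complex.
From mathcomp Require Import ring lra.
From Stdlib Require Import Classical.
Import Order.TTheory GRing.Theory Num.Theory.
Local Open Scope ring_scope.

Lemma finroots (F : idomainType) (p : {poly F}) :
  p != 0 -> exists Z : seq F, forall s, root p s -> s \in Z.
Proof.
move: {2}(size p) (leqnn (size p)) => n; elim: n p => [|n IH] p.
  by rewrite leqn0 size_poly_eq0 => ->.
move=> Hs Hp.
case: (classic (exists z, root p z)) => [[z Hz]|Hno]; last first.
  by exists [::] => s Hs'; exfalso; apply: Hno; exists s.
have /factor_theorem [r Er] := Hz.
have r0 : r != 0 by apply: contra Hp; rewrite Er => /eqP ->; rewrite mul0r.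
have : (size r <= n)%N.
  have := Hs; rewrite Er size_Mmonic ?monicXsubC // size_XsubC addn2 /=.
  by rewrite ltnS.
move=> /(IH r)/(_ r0) [Z HZ].
exists (z :: Z) => s; rewrite Er rootM root_XsubC in_cons => /orP [/HZ ->|->].
  by rewrite orbT.
by [].
Qed.

Lemma exists_notin (R : realType) (Z : seq R[i]) : exists s, s \notin Z.
Proof.
apply: NNPP => H0.
have H : forall s, ~ (s \notin Z) by move=> s Hs; apply: H0; exists s.
pose L := [seq (i%:R : R[i]) | i <- iota 0 (size Z).+1].
have uL : uniq L.
  rewrite map_inj_uniq ?iota_uniq // => i j /eqP.
  by rewrite eqr_nat => /eqP.
have sub : {subset L <= Z} by move=> u _; apply/negPn/negP; apply: H.
have := uniq_leq_size uL sub.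
by rewrite size_map size_iota ltnn.
Qed.

Set Implicit Arguments. Unset Strict Implicit.

Section S.
Variable R : realType.
Local Notation C := R[i].

Lemma ratfun_cmp (f g : C -> C) : is_ratfun f -> is_ratfun g ->
  eq_cofin f g \/ exists Z : seq C, forall s, s \notin Z -> f s != g s.
Proof.
move=> [pf [rf [rf0 Hf]]] [pg [rg [rg0 Hg]]].
have [Zf HZf] := @finroots _ _ rf0; have [Zg HZg] := @finroots _ _ rg0.
have nz : forall s, s \notin Zf ++ Zg -> rf.[s] != 0 /\ rg.[s] != 0.
  move=> s; rewrite mem_cat negb_or => /andP [h1 h2]; split.
    by apply: contra h1 => /eqP h; apply: HZf; apply/eqP.
  by apply: contra h2 => /eqP h; apply: HZg; apply/eqP.
set H := pf * rg - pg * rf.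
case: (boolP (H == 0)) => [/eqP H0|H0].
  left; exists (Zf ++ Zg) => s /nz [n1 n2]; rewrite Hf // Hg //.
  have : H.[s] = 0 by rewrite H0 horner0.
  rewrite /H hornerD hornerN !hornerM => /eqP; rewrite subr_eq0 => /eqP E.
  by apply/eqP; rewrite eqr_div // E.
right; have [ZH HZH] := @finroots _ _ H0.
exists (ZH ++ Zf ++ Zg) => s; rewrite mem_cat negb_or => /andP [h1 /nz [n1 n2]].
rewrite Hf // Hg // eqr_div //; apply: contra h1 => /eqP E; apply: HZH.
by rewrite /root /H hornerD hornerN !hornerM E subrr.
Qed.

Lemma ratfun_scale (k : C) (g : C -> C) : is_ratfun g -> is_ratfun (fun s => k * g s).
Proof.
move=> [p [r [r0 H]]]; exists (k%:P * p), r; split => // s hs.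
by rewrite H // hornerM hornerC mulrA.
Qed.

Lemma ratfun_const (c : C) : is_ratfun (fun _ => c).
Proof.
exists c%:P, 1; split; first exact: oner_neq0.
by move=> s _; rewrite hornerC hornerE divr1.
Qed.

Lemma nonconst_finval (u : C -> C) : is_ratfun u -> nonconst u ->
  forall (W Z : seq C), ~ (forall s, s \notin Z -> u s \in W).
Proof.
move=> ru nu; elim=> [|w W IH] Z H.
  by have [s hs] := exists_notin _ Z; have := H s hs.
case: (ratfun_cmp ru (ratfun_const w)) => [E|[Z' HZ']].
  by apply: nu; exists w.
apply: (IH (Z ++ Z')) => s; rewrite mem_cat negb_or => /andP [h1 h2].
by have := H s h1; rewrite in_cons (negbTE (HZ' s h2)).
Qed.

Lemma poly_contra (u : C -> C) (P : {poly C}) : is_ratfun u -> nonconst u ->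
  P != 0 -> eq_cofin (fun s => P.[u s]) (fun _ => 0) -> False.
Proof.
move=> ru nu P0 [Z HZ]; have [W HW] := @finroots _ _ P0.
apply: (nonconst_finval ru nu (W := W) (Z := Z)) => s hs.
by apply: HW; apply/eqP; apply: HZ.
Qed.
End S.

Section S.
Variable R : realType.
Local Notation C := R[i].
Lemma toCE (a : R) : toC a = real_complex R a. Proof. by []. Qed.
Lemma toCD (a b : R) : toC (a + b) = toC a + toC b. Proof. by rewrite !toCE rmorphD. Qed.
Lemma toCM (a b : R) : toC (a * b) = toC a * toC b. Proof. by rewrite !toCE rmorphM. Qed.
Lemma toCN (a : R) : toC (- a) = - toC a. Proof. by rewrite !toCE rmorphN. Qed.
Lemma toC0 : toC (0 : R) = 0. Proof. by []. Qed.
Lemma toC_eq0 (a : R) : (toC a == 0) = (a == 0).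
Proof. by rewrite /toC eq_complex /= eqxx andbT. Qed.

Lemma ez2 (X : C) : X ^ (1 + 1 : int) = X ^+ 2. Proof. by []. Qed.
Lemma ez0 (X : C) : X ^ (-1 + 1 : int) = 1. Proof. by []. Qed.
Lemma ez1 (X : C) : X ^ (0 + 1 : int) = X. Proof. by []. Qed.

Lemma mkP (c0 c1 c2 : R) : ~ (c0 = 0 /\ c1 = 0 /\ c2 = 0) ->
  exists P : {poly C}, P != 0 /\
    forall X, P.[X] = X ^+ 2 * (toC c0 + toC c1 * X + toC c2 * X ^+ 2).
Proof.
move=> Hc.
exists ('X^2 * ((toC c0)%:P + (toC c1)%:P * 'X + (toC c2)%:P * 'X^2)); split; last first.
  by move=> X; rewrite !hornerE.
rewrite mulf_neq0 ?expf_neq0 ?polyX_eq0 //.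
apply/negP => /eqP E; apply: Hc.
have e0 := congr1 (fun p : {poly C} => p`_0) E.
have e1 := congr1 (fun p : {poly C} => p`_1) E.
have e2 := congr1 (fun p : {poly C} => p`_2) E.
move: e0 e1 e2; rewrite /= !coefE /= => /eqP e0 /eqP e1 /eqP e2.
rewrite ?(mulr0, mul0r, addr0, add0r, mulr1) in e0 e1 e2.
by move: e0 e1 e2; rewrite !toC_eq0 => /eqP -> /eqP -> /eqP ->.
Qed.

Lemma kpos (t d1 d2 k : R) : 0 < t -> 0 < d1 -> 0 < d2 ->
  k - t * (d1 + d2 * k ^+ 2) = 0 -> 0 < k.
Proof.
move=> Ht H1 H2 H.
have h1 : 0 <= d2 * k ^+ 2 by apply: mulr_ge0; [lra|apply: sqr_ge0].
have : 0 < t * (d1 + d2 * k ^+ 2) by apply: mulr_gt0 => //; lra.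
lra.
Qed.

Lemma S_cases (S : seq (int * int)) : S \in [:: S1; S2; S3; S4; S5] ->
  S = S1 \/ S = S2 \/ S = S3 \/ S = S4 \/ S = S5.
Proof.
rewrite !inE => /orP[/eqP->|/orP[/eqP->|/orP[/eqP->|/orP[/eqP->|/eqP->]]]].
all: tauto.
Qed.

Lemma kernel_lineY (S : seq (int * int)) (d : int * int -> R) (t k : R) :
  S \in [:: S1; S2; S3; S4; S5] -> (forall st, st \in S -> 0 < d st) -> 0 < t ->
  exists P : {poly C}, P != 0 /\ forall X, kernel S d t X (toC k * X) = P.[X].
Proof.
move=> HS Hd Ht.
move: Hd; case: (S_cases HS) => [->|[->|[->|[->|->]]]] Hd;
have d1 : 0 < d (1, -1) by apply: Hd; rewrite /S1 /S2 /S3 /S4 /S5 !inE eqxx ?orbT.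
all: have d2 : 0 < d (-1, 1) by apply: Hd; rewrite /S1 /S2 /S3 /S4 /S5 !inE eqxx ?orbT.
- have d3 : 0 < d (0, 1) by apply: Hd; rewrite /S1 /S2 /S3 /S4 /S5 !inE eqxx ?orbT.
  have [|P [P0 HP]] := @mkP (k - t * (d (1,-1) + d (-1,1) * k^+2)) (- (t * (d (0,1) * k^+2))) 0.
    move=> [h0 [h1 h2]]; have kp := kpos Ht d1 d2 h0; have := mulr_gt0 Ht (mulr_gt0 d3 (exprn_gt0 2 kp)); lra.
  exists P; split => // X; rewrite HP /kernel /S1 !big_cons big_nil /= !(ez0, ez1, ez2).
  rewrite !(toCD, toCM, toCN, toC0); ring.
- have d3 : 0 < d (0, 1) by apply: Hd; rewrite /S1 /S2 /S3 /S4 /S5 !inE eqxx ?orbT.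
  have d4 : 0 < d (1, 0) by apply: Hd; rewrite /S1 /S2 /S3 /S4 /S5 !inE eqxx ?orbT.
  have [|P [P0 HP]] := @mkP (k - t * (d (1,-1) + d (-1,1) * k^+2))
       (- (t * (d (0,1) * k^+2 + d (1,0) * k))) 0.
    move=> [h0 [h1 h2]]; have kp := kpos Ht d1 d2 h0; have := mulr_gt0 Ht (addr_gt0 (mulr_gt0 d3 (exprn_gt0 2 kp)) (mulr_gt0 d4 kp)); lra.
  exists P; split => // X; rewrite HP /kernel /S2 !big_cons big_nil /= !(ez0, ez1, ez2).
  rewrite !(toCD, toCM, toCN, toC0); ring.
- have d5 : 0 < d (1, 1) by apply: Hd; rewrite /S1 /S2 /S3 /S4 /S5 !inE eqxx ?orbT.
  have [|P [P0 HP]] := @mkP (k - t * (d (1,-1) + d (-1,1) * k^+2)) 0 (- (t * (d (1,1) * k^+2))).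
    move=> [h0 [h1 h2]]; have kp := kpos Ht d1 d2 h0; have := mulr_gt0 Ht (mulr_gt0 d5 (exprn_gt0 2 kp)); lra.
  exists P; split => // X; rewrite HP /kernel /S3 !big_cons big_nil /= !(ez0, ez1, ez2).
  rewrite !(toCD, toCM, toCN, toC0); ring.
- have d3 : 0 < d (0, 1) by apply: Hd; rewrite /S1 /S2 /S3 /S4 /S5 !inE eqxx ?orbT.
  have d5 : 0 < d (1, 1) by apply: Hd; rewrite /S1 /S2 /S3 /S4 /S5 !inE eqxx ?orbT.
  have [|P [P0 HP]] := @mkP (k - t * (d (1,-1) + d (-1,1) * k^+2))
       (- (t * (d (0,1) * k^+2))) (- (t * (d (1,1) * k^+2))).
    move=> [h0 [h1 h2]]; have kp := kpos Ht d1 d2 h0; have := mulr_gt0 Ht (mulr_gt0 d5 (exprn_gt0 2 kp)); lra.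
  exists P; split => // X; rewrite HP /kernel /S4 !big_cons big_nil /= !(ez0, ez1, ez2).
  rewrite !(toCD, toCM, toCN, toC0); ring.
- have d3 : 0 < d (0, 1) by apply: Hd; rewrite /S1 /S2 /S3 /S4 /S5 !inE eqxx ?orbT.
  have d4 : 0 < d (1, 0) by apply: Hd; rewrite /S1 /S2 /S3 /S4 /S5 !inE eqxx ?orbT.
  have d5 : 0 < d (1, 1) by apply: Hd; rewrite /S1 /S2 /S3 /S4 /S5 !inE eqxx ?orbT.
  have [|P [P0 HP]] := @mkP (k - t * (d (1,-1) + d (-1,1) * k^+2))
       (- (t * (d (0,1) * k^+2 + d (1,0) * k))) (- (t * (d (1,1) * k^+2))).
    move=> [h0 [h1 h2]]; have kp := kpos Ht d1 d2 h0; have := mulr_gt0 Ht (mulr_gt0 d5 (exprn_gt0 2 kp)); lra.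
  exists P; split => // X; rewrite HP /kernel /S5 !big_cons big_nil /= !(ez0, ez1, ez2).
  rewrite !(toCD, toCM, toCN, toC0); ring.
Qed.
Lemma kernel_lineX (S : seq (int * int)) (d : int * int -> R) (t k : R) :
  S \in [:: S1; S2; S3; S4; S5] -> (forall st, st \in S -> 0 < d st) -> 0 < t ->
  exists P : {poly C}, P != 0 /\ forall X, kernel S d t (toC k * X) X = P.[X].
Proof.
move=> HS Hd Ht.
move: Hd; case: (S_cases HS) => [->|[->|[->|[->|->]]]] Hd;
have d1 : 0 < d (1, -1) by apply: Hd; rewrite /S1 /S2 /S3 /S4 /S5 !inE eqxx ?orbT.
all: have d2 : 0 < d (-1, 1) by apply: Hd; rewrite /S1 /S2 /S3 /S4 /S5 !inE eqxx ?orbT.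
- have d3 : 0 < d (0, 1) by apply: Hd; rewrite /S1 /S2 /S3 /S4 /S5 !inE eqxx ?orbT.
  have [|P [P0 HP]] := @mkP (k - t * (d (-1,1) + d (1,-1) * k^+2)) (- (t * (d (0,1) * k))) 0.
    move=> [h0 [h1 h2]]; have kp := kpos Ht d2 d1 h0; have := mulr_gt0 Ht (mulr_gt0 d3 kp); lra.
  exists P; split => // X; rewrite HP /kernel /S1 !big_cons big_nil /= !(ez0, ez1, ez2).
  rewrite !(toCD, toCM, toCN, toC0); ring.
- have d3 : 0 < d (0, 1) by apply: Hd; rewrite /S1 /S2 /S3 /S4 /S5 !inE eqxx ?orbT.
  have d4 : 0 < d (1, 0) by apply: Hd; rewrite /S1 /S2 /S3 /S4 /S5 !inE eqxx ?orbT.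
  have [|P [P0 HP]] := @mkP (k - t * (d (-1,1) + d (1,-1) * k^+2))
       (- (t * (d (0,1) * k + d (1,0) * k^+2))) 0.
    move=> [h0 [h1 h2]]; have kp := kpos Ht d2 d1 h0; have := mulr_gt0 Ht (addr_gt0 (mulr_gt0 d3 kp) (mulr_gt0 d4 (exprn_gt0 2 kp))); lra.
  exists P; split => // X; rewrite HP /kernel /S2 !big_cons big_nil /= !(ez0, ez1, ez2).
  rewrite !(toCD, toCM, toCN, toC0); ring.
- have d5 : 0 < d (1, 1) by apply: Hd; rewrite /S1 /S2 /S3 /S4 /S5 !inE eqxx ?orbT.
  have [|P [P0 HP]] := @mkP (k - t * (d (-1,1) + d (1,-1) * k^+2)) 0 (- (t * (d (1,1) * k^+2))).
    move=> [h0 [h1 h2]]; have kp := kpos Ht d2 d1 h0; have := mulr_gt0 Ht (mulr_gt0 d5 (exprn_gt0 2 kp)); lra.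
  exists P; split => // X; rewrite HP /kernel /S3 !big_cons big_nil /= !(ez0, ez1, ez2).
  rewrite !(toCD, toCM, toCN, toC0); ring.
- have d3 : 0 < d (0, 1) by apply: Hd; rewrite /S1 /S2 /S3 /S4 /S5 !inE eqxx ?orbT.
  have d5 : 0 < d (1, 1) by apply: Hd; rewrite /S1 /S2 /S3 /S4 /S5 !inE eqxx ?orbT.
  have [|P [P0 HP]] := @mkP (k - t * (d (-1,1) + d (1,-1) * k^+2))
       (- (t * (d (0,1) * k))) (- (t * (d (1,1) * k^+2))).
    move=> [h0 [h1 h2]]; have kp := kpos Ht d2 d1 h0; have := mulr_gt0 Ht (mulr_gt0 d5 (exprn_gt0 2 kp)); lra.
  exists P; split => // X; rewrite HP /kernel /S4 !big_cons big_nil /= !(ez0, ez1, ez2).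
  rewrite !(toCD, toCM, toCN, toC0); ring.
- have d3 : 0 < d (0, 1) by apply: Hd; rewrite /S1 /S2 /S3 /S4 /S5 !inE eqxx ?orbT.
  have d4 : 0 < d (1, 0) by apply: Hd; rewrite /S1 /S2 /S3 /S4 /S5 !inE eqxx ?orbT.
  have d5 : 0 < d (1, 1) by apply: Hd; rewrite /S1 /S2 /S3 /S4 /S5 !inE eqxx ?orbT.
  have [|P [P0 HP]] := @mkP (k - t * (d (-1,1) + d (1,-1) * k^+2))
       (- (t * (d (0,1) * k + d (1,0) * k^+2))) (- (t * (d (1,1) * k^+2))).
    move=> [h0 [h1 h2]]; have kp := kpos Ht d2 d1 h0; have := mulr_gt0 Ht (mulr_gt0 d5 (exprn_gt0 2 kp)); lra.
  exists P; split => // X; rewrite HP /kernel /S5 !big_cons big_nil /= !(ez0, ez1, ez2).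
  rewrite !(toCD, toCM, toCN, toC0); ring.
Qed.
End S.

Section S.
Variable R : realType.
Local Notation C := R[i].

Lemma inv_rel (AC cC X Y : C) : cC != 0 -> AC / X - cC / Y = 0 -> Y = cC / AC * X.
Proof.
move=> c0 /eqP; rewrite subr_eq0 => /eqP E.
case: (eqVneq Y 0) => [Y0|Y0].
  move: E; rewrite Y0 invr0 mulr0 => /eqP; rewrite mulf_eq0 invr_eq0 => /orP [] /eqP ->.
    by rewrite invr0 mulr0 mul0r.
  by rewrite mulr0.
have A0 : AC != 0.
  by apply/eqP => A0; move: E; rewrite A0 mul0r => /esym/eqP; rewrite mulf_eq0 invr_eq0 (negbTE c0) (negbTE Y0).
have X0 : X != 0.
  by apply/eqP => X0; move: E; rewrite X0 invr0 mulr0 => /esym/eqP; rewrite mulf_eq0 invr_eq0 (negbTE c0) (negbTE Y0).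
have -> : Y = cC / (cC / Y) by rewrite invf_div mulrCA divff // mulr1.
by rewrite -E; field; rewrite A0 X0.
Qed.

Lemma toCdiv (u v : R) : toC (u / v) = toC u / toC v.
Proof. by rewrite !toCE fmorph_div. Qed.

Lemma line_nz (S : seq (int * int)) (d : int * int -> R) (t : R) (x y : C -> C) (AC cC : C) (k : R) :
  S \in [:: S1; S2; S3; S4; S5] -> (forall st, st \in S -> 0 < d st) -> 0 < t ->
  is_ratfun x -> is_ratfun y -> nonconst x ->
  eq_cofin (fun s => kernel S d t (x s) (y s)) (fun _ => 0) ->
  cC != 0 -> toC k = cC / AC ->
  exists Z : seq C, forall s, s \notin Z -> AC / x s - cC / y s != 0.
Proof.
move=> HS Hd Ht rx ry nx [Zk HK] c0 Hk.
case: (ratfun_cmp ry (ratfun_scale (toC k) rx)) => [[Ze HE]|[Z HZ]]; last first.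
  exists Z => s /HZ; apply: contra => /eqP /(inv_rel c0) ->; by rewrite Hk.
exfalso; have [P [P0 HP]] := kernel_lineY k HS Hd Ht.
apply: (poly_contra rx nx P0); exists (Zk ++ Ze) => s; rewrite mem_cat negb_or => /andP [h1 h2].
by rewrite -HP -HE // HK.
Qed.

Lemma line_nz2 (S : seq (int * int)) (d : int * int -> R) (t : R) (x y : C -> C) (AC cC : C) (k : R) :
  S \in [:: S1; S2; S3; S4; S5] -> (forall st, st \in S -> 0 < d st) -> 0 < t ->
  is_ratfun x -> is_ratfun y -> nonconst y ->
  eq_cofin (fun s => kernel S d t (x s) (y s)) (fun _ => 0) ->
  cC != 0 -> toC k = cC / AC ->
  exists Z : seq C, forall s, s \notin Z -> AC / y s - cC / x s != 0.
Proof.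
move=> HS Hd Ht rx ry ny [Zk HK] c0 Hk.
case: (ratfun_cmp rx (ratfun_scale (toC k) ry)) => [[Ze HE]|[Z HZ]]; last first.
  exists Z => s /HZ; apply: contra => /eqP /(inv_rel c0) ->; by rewrite Hk.
exfalso; have [P [P0 HP]] := kernel_lineX k HS Hd Ht.
apply: (poly_contra ry ny P0); exists (Zk ++ Ze) => s; rewrite mem_cat negb_or => /andP [h1 h2].
by rewrite -HP -HE // HK.
Qed.
End S.

Unset Implicit Arguments. Set Strict Implicit.

Theorem lemma2p2 (R : realType) (S : seq (int * int)) (d : int * int -> R)
    (a b t q : R) (x y F G : R[i] -> R[i]) :
  (* step set and weights *)
  S \in [:: S1; S2; S3; S4; S5] ->
  (forall st, st \in S -> 0 < d st) ->
  0 < a -> 0 < b -> 0 < t ->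
  (* q real, not a root of unity (and nonzero) *)
  q != 0 -> (forall n : nat, (0 < n)%N -> q ^+ n != 1) ->
  (* the parametrization phi = (x, y) of the kernel curve *)
  is_ratfun x -> is_ratfun y -> nonconst x -> nonconst y ->
  eq_cofin (fun s => kernel S d t (x s) (y s)) (fun _ => 0) ->
  gen_injective x y ->
  zero_at_0_and_inf x -> zero_at_0_and_inf y ->
  eq_cofin (fun s => x (iota1 s)) x ->
  eq_cofin (fun s => y (iota2 q s)) y ->
  (* F~, G~ are rational and satisfy the functional equations of the context *)
  is_ratfun F -> is_ratfun G ->
  eq_cofin (fun s => gam1 d a t x y s * F s + gam2 d b t x y s * G s + toC (omega a b))
           (fun _ => 0) ->
  eq_cofin (fun s => F (s / toC q))
           (fun s => gam d a b t x y s / gam d a b t x y (iota2 q s) * F s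
                     + (toC (omega a b) / gam2 d b t x y s
                        - toC (omega a b) / gam2 d b t x y (iota2 q s))
                       / gam d a b t x y (iota2 q s)) ->
  let f  := fun s => (F s + F (iota1 s)) / 2 in
  let g  := fun s => (G s + G (iota2 q s)) / 2 in
  let fh := fun s => (F s - F (iota1 s)) / 2 in
  let gh := fun s => (G s - G (iota2 q s)) / 2 in
  (* (1) *)
  [/\ eq_cofin (fun s => gam1 d a t x y s * f s + gam2 d b t x y s * g s + toC (omega a b))
               (fun _ => 0),
      eq_cofin (fun s => f (iota1 s)) f &
      eq_cofin (fun s => g (iota2 q s)) g] /\
  (* (2) *)
  [/\ eq_cofin (fun s => gam1 d a t x y s * fh s + gam2 d b t x y s * gh s)
               (fun _ => 0),
      eq_cofin (fun s => fh (iota1 s)) (fun s => - fh s) &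
      eq_cofin (fun s => gh (iota2 q s)) (fun s => - gh s)].
Proof.
move=> HS Hd Ha Hb Ht q0 qn rx ry nx ny HK ginj x0 y0 xi yi rF rG [Zm Hm] [Zq Hq] f g fh gh.
have d1 : 0 < d (1, -1).
  by apply: Hd; case: (S_cases HS) => [->|[->|[->|[->|->]]]]; rewrite /S1 /S2 /S3 /S4 /S5 !inE eqxx.
have d2 : 0 < d (-1, 1).
  by apply: Hd; case: (S_cases HS) => [->|[->|[->|[->|->]]]]; rewrite /S1 /S2 /S3 /S4 /S5 !inE eqxx ?orbT.
have [Z1 H1] : exists Z : seq R[i], forall s, s \notin Z -> gam1 d a t x y s != 0.
  apply: (line_nz (k := t * d (1, -1) / Acoef a) HS Hd Ht rx ry nx HK).
    by rewrite toC_eq0; apply: lt0r_neq0; apply: mulr_gt0.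
  by rewrite toCdiv.
have [Z2 H2] : exists Z : seq R[i], forall s, s \notin Z -> gam2 d b t x y s != 0.
  apply: (line_nz2 (k := t * d (-1, 1) / Acoef b) HS Hd Ht rx ry ny HK).
    by rewrite toC_eq0; apply: lt0r_neq0; apply: mulr_gt0.
  by rewrite toCdiv.
have qC0 : toC q != 0 by rewrite toC_eq0.
have iqK : forall s, iota2 q (iota2 q s) = s.
  by move=> s; rewrite /iota2 invf_div mulrA mulrC mulKf.
have iqZ : forall (Z : seq R[i]) s, s \notin map (iota2 q) Z -> iota2 q s \notin Z.
  move=> Z s; apply: contra => h; rewrite -(iqK s); exact: map_f.
have [Zk Hk] : exists Z : seq R[i], forall s, s \notin Z ->
    gam1 d a t x y s * F (iota1 s) + gam2 d b t x y s * G (iota2 q s) + toC (omega a b) = 0.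
  exists (Z1 ++ Z2 ++ map (iota2 q) Z2 ++ map (iota2 q) Zm ++ map (iota2 q) Zq) => s.
  rewrite !mem_cat !negb_or => /and5P [s1 s2 s3 s4 s5].
  have g1 := H1 s s1; have g2 := H2 s s2; have h2 := H2 _ (iqZ _ _ s3).
  have E1 := Hm _ (iqZ _ _ s4); have E2 := Hq _ (iqZ _ _ s5).
  move: E1 E2; rewrite /= iqK.
  have -> : iota2 q s / toC q = iota1 s by rewrite /iota2 /iota1 mulrAC divff // mul1r.
  rewrite /gam => E1 ->.
  move: g1 g2 h2 E1.
  set g1v := gam1 d a t x y s; set g2v := gam2 d b t x y s.
  set h1v := gam1 d a t x y (iota2 q s); set h2v := gam2 d b t x y (iota2 q s).
  set Fs := F (iota2 q s); set Gs := G (iota2 q s); set w := toC (omega a b).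
  move=> g1 g2 h2 E1.
  have -> : Gs = - (h1v * Fs + w) / h2v.
    have E' : h2v * Gs = - (h1v * Fs + w) by rewrite -[LHS]subr0 -E1; ring.
    by rewrite -E' mulrC mulKf.
  by field; rewrite g1 g2 h2.
split; split.
- exists (Zm ++ Zk) => s; rewrite mem_cat negb_or => /andP [s1 s2].
  have := Hm s s1; have := Hk s s2; rewrite /f /g => e1 e2.
  have := congr1 (fun z => z / 2) (congr2 (fun u v => u + v) e1 e2).
  rewrite /= addr0 mul0r => <-; by field.
- by exists [::] => s _; rewrite /f /iota1 invrK addrC.
- by exists [::] => s _; rewrite /g iqK addrC.
- exists (Zm ++ Zk) => s; rewrite mem_cat negb_or => /andP [s1 s2].
  have := Hm s s1; have := Hk s s2; rewrite /fh /gh => e1 e2.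
  have := congr1 (fun z => z / 2) (congr2 (fun u v => v - u) e1 e2).
  rewrite /= subr0 mul0r => <-; by field.
- by exists [::] => s _; rewrite /fh /iota1 invrK; ring.
- by exists [::] => s _; rewrite /gh iqK; ring.
Qed.
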